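(* Let $\alpha>0$, $0<\beta_1<1$, $0<\beta_2<1$, $\epsilon>0$, $\lambda>0$, and $w_0\in\mathbb{R}$. Define the Adam iterates for the gradient $g(w)=\lambda w$ by $m_0=0$, $v_0=0$ and, for $t\ge1$, $$g_t=\lambda w_{t-1},\quad m_t=\beta_1 m_{t-1}+(1-\beta_1)g_t,\quad v_t=\beta_2 v_{t-1}+(1-\beta_2)g_t^2,\quad w_t=w_{t-1}-\alpha\,\frac{m_t/(1-\beta_1^t)}{\sqrt{v_t/(1-\beta_2^t)+\epsilon}}.$$ If $w_t$ converges to some $w_*\in\mathbb{R}$ as $t\to\infty$, then $w_*=0$.
   Context: This models a single scalar weight $w_t$ of a network under $L_2$ regularization with parameter $\lambda$, trained with the Adam optimizer, in the situation where the loss gradient vanishes (the connected ReLU unit is never activated), so that the gradient equals $\lambda$ times the current weight. *)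

(* Defs.v *)
From Stdlib Require Import Reals.
Open Scope R_scope.

Fixpoint adam_state (alpha b1 b2 eps lam w0 : R) (t : nat) : R * R * R :=
  match t with
  | O => (0, 0, w0)
  | S k =>
      let '(m, v, w) := adam_state alpha b1 b2 eps lam w0 k in
      let g := lam * w in
      let m' := b1 * m + (1 - b1) * g in
      let v' := b2 * v + (1 - b2) * g ^ 2 in
      let w' := w - alpha * (m' / (1 - b1 ^ (S k)))
                      / sqrt (v' / (1 - b2 ^ (S k)) + eps) in
      (m', v', w')
  end.

Definition adam_w (alpha b1 b2 eps lam w0 : R) (t : nat) : R :=
  snd (adam_state alpha b1 b2 eps lam w0 t).

(* Main.v *)
Require Import Defs.
From Stdlib Require Import Reals.
From Stdlib Require Import Lra Psatz Arith Lia.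
Open Scope R_scope.

Lemma pow_bnd (b : R) (n : nat) : 0 < b < 1 -> 0 < b ^ n <= 1.
Proof.
  intros Hb; induction n as [|n IH]; simpl; [lra|].
  split; nra.
Qed.

Section S.
Variables alpha b1 b2 eps lam w0 : R.
Definition st k := adam_state alpha b1 b2 eps lam w0 k.
Definition MM k := fst (fst (st k)).
Definition VV k := snd (fst (st k)).
Definition WW k := snd (st k).

Lemma step k :
  MM (S k) = b1 * MM k + (1 - b1) * (lam * WW k) /\
  VV (S k) = b2 * VV k + (1 - b2) * (lam * WW k) ^ 2 /\
  WW (S k) = WW k - alpha * (MM (S k) / (1 - b1 ^ (S k)))
                      / sqrt (VV (S k) / (1 - b2 ^ (S k)) + eps).
Proof.
  unfold MM, VV, WW, st. simpl adam_state.
  destruct (adam_state alpha b1 b2 eps lam w0 k) as [[m v] w]. simpl.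
  repeat split; reflexivity.
Qed.
End S.

Lemma bounded_prefix (u : nat -> R) (N : nat) :
  exists B, 0 <= B /\ forall n, (n <= N)%nat -> Rabs (u n) <= B.
Proof.
  induction N as [|N [B [HB0 HB]]].
  - exists (Rabs (u 0%nat)). split; [apply Rabs_pos|].
    intros n Hn. replace n with 0%nat by lia. lra.
  - exists (Rmax B (Rabs (u (S N)))). split.
    + eapply Rle_trans; [exact HB0| apply Rmax_l].
    + intros n Hn. destruct (Nat.eq_dec n (S N)) as [->|Hne].
      * apply Rmax_r.
      * eapply Rle_trans; [apply HB; lia| apply Rmax_l].
Qed.

Theorem proposition3p3 (alpha b1 b2 eps lam w0 wstar : R) :
  0 < alpha -> 0 < b1 < 1 -> 0 < b2 < 1 -> 0 < eps -> 0 < lam ->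
  Un_cv (adam_w alpha b1 b2 eps lam w0) wstar ->
  wstar = 0.
Proof.
  intros Ha Hb1 Hb2 He Hl Hcv.
  set (W := WW alpha b1 b2 eps lam w0).
  set (M := MM alpha b1 b2 eps lam w0).
  set (V := VV alpha b1 b2 eps lam w0).
  assert (HW : forall n, adam_w alpha b1 b2 eps lam w0 n = W n) by reflexivity.
  destruct (Hcv 1 ltac:(lra)) as [N1 HN1].
  destruct (bounded_prefix W N1) as [B0 [HB00 HB0]].
  set (B := B0 + Rabs wstar + 1).
  assert (HB : forall n, Rabs (W n) <= B).
  { intros n. destruct (le_lt_dec n N1) as [h|h].
    - specialize (HB0 n h). unfold B. pose proof (Rabs_pos wstar). lra.
    - assert (h' : (n >= N1)%nat) by lia. specialize (HN1 n h').
      rewrite HW in HN1. unfold R_dist in HN1.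
      pose proof (Rabs_triang_inv (W n) wstar). unfold B. lra. }
  set (G := (lam * B) ^ 2).
  assert (HV : forall n, 0 <= V n <= G).
  { induction n as [|n IH].
    - unfold V, VV, st; simpl. unfold G. split; [lra|]. apply pow2_ge_0.
    - destruct (step alpha b1 b2 eps lam w0 n) as [_ [Hv _]].
      fold V W in Hv. rewrite Hv.
      assert (Hg : (lam * W n) ^ 2 <= G).
      { unfold G. specialize (HB n).
        assert (Hb : Rabs (lam * W n) <= lam * B).
        { rewrite Rabs_mult, (Rabs_right lam) by lra. nra. }
        pose proof (Rabs_pos (lam * W n)).
        rewrite <- (pow2_abs (lam * W n)). nra. }
      pose proof (pow2_ge_0 (lam * W n)). nra. }
  set (Smax := sqrt (G / (1 - b2) + eps)).
  set (C := Smax / alpha).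
  assert (HC0 : 0 <= C).
  { unfold C, Rdiv. apply Rmult_le_pos; [apply sqrt_pos|].
    left; apply Rinv_0_lt_compat; lra. }
  assert (HM : forall k, Rabs (M (S k)) <= C * Rabs (W (S k) - W k)).
  { intros k. destruct (step alpha b1 b2 eps lam w0 k) as [_ [_ Hw]].
    fold M V W in Hw.
    set (c := 1 - b1 ^ S k) in *.
    set (c2 := 1 - b2 ^ S k) in *.
    set (Sq := sqrt (V (S k) / c2 + eps)) in *.
    assert (Hc : 0 < c <= 1).
    { pose proof (pow_bnd b1 k Hb1). unfold c. simpl. nra. }
    assert (Hc2 : 1 - b2 <= c2).
    { unfold c2. simpl. pose proof (pow_bnd b2 k Hb2). nra. }
    assert (HSq : 0 < Sq <= Smax).
    { unfold Sq, Smax. destruct (HV (S k)) as [Hv0 Hv1]. split.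
      - apply sqrt_lt_R0. assert (0 <= V (S k) / c2).
        { unfold Rdiv. apply Rmult_le_pos; [lra|]. left; apply Rinv_0_lt_compat; lra. }
        lra.
      - apply sqrt_le_1_alt. apply Rplus_le_compat_r.
        apply Rle_trans with (G / c2).
        + unfold Rdiv. apply Rmult_le_compat_r; [left; apply Rinv_0_lt_compat; lra|lra].
        + unfold Rdiv. apply Rmult_le_compat_l; [lra|]. apply Rinv_le_contravar; lra. }
    assert (Heq : M (S k) * alpha = - (W (S k) - W k) * Sq * c).
    { rewrite Hw. field. lra. }
    assert (Habs : Rabs (M (S k)) * alpha = Rabs (W (S k) - W k) * Sq * c).
    { rewrite <- (Rabs_right alpha) by lra. rewrite <- Rabs_mult, Heq.
      rewrite !Rabs_mult, Rabs_Ropp, (Rabs_right Sq), (Rabs_right c) by lra. reflexivity. }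
    unfold C. pose proof (Rabs_pos (W (S k) - W k)).
    apply Rmult_le_reg_r with alpha; [lra|].
    rewrite Habs. unfold Rdiv. rewrite (Rmult_comm Smax), Rmult_assoc.
    replace (/ alpha * Smax * Rabs (W (S k) - W k) * alpha) with (Smax * Rabs (W (S k) - W k)) by (field; lra).
    assert (Sq * c <= Smax) by nra. nra. }
  assert (HLW : forall k, Rabs (lam * W (S k)) <=
     C * (Rabs (W (S (S k)) - W (S k)) + Rabs (W (S k) - W k)) / (1 - b1)).
  { intros k. destruct (step alpha b1 b2 eps lam w0 (S k)) as [Hm _].
    fold M W in Hm.
    assert (Hx : lam * W (S k) = (M (S (S k)) - b1 * M (S k)) / (1 - b1)).
    { rewrite Hm. field. lra. }
    rewrite Hx. unfold Rdiv. rewrite Rabs_mult, (Rabs_right (/ (1 - b1))).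
    2:{ left; apply Rinv_0_lt_compat; lra. }
    apply Rmult_le_compat_r; [left; apply Rinv_0_lt_compat; lra|].
    pose proof (HM (S k)). pose proof (HM k).
    pose proof (Rabs_triang (M (S (S k))) (- (b1 * M (S k)))).
    rewrite Rabs_Ropp, Rabs_mult, (Rabs_right b1) in H1 by lra.
    pose proof (Rabs_pos (M (S k))).
    assert (b1 * Rabs (M (S k)) <= Rabs (M (S k))) by nra. replace (M (S (S k)) - b1 * M (S k)) with (M (S (S k)) + - (b1 * M (S k))) by ring. rewrite Rmult_plus_distr_l. lra. }
  set (K := 4 * C / (1 - b1) + lam).
  assert (HK : 0 < K).
  { unfold K. assert (0 <= 4 * C / (1 - b1)).
    { unfold Rdiv. apply Rmult_le_pos; [lra|]. left; apply Rinv_0_lt_compat; lra. }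
    lra. }
  assert (Hsmall : forall d, 0 < d -> Rabs (lam * wstar) <= K * d).
  { intros d Hd. destruct (Hcv d Hd) as [N HN].
    assert (Hn : forall n, (n >= N)%nat -> Rabs (W n - wstar) < d).
    { intros n h. specialize (HN n h). rewrite HW in HN. exact HN. }
    pose proof (Hn N (le_n _)) as h0.
    pose proof (Hn (S N) ltac:(lia)) as h1.
    pose proof (Hn (S (S N)) ltac:(lia)) as h2.
    pose proof (HLW N) as hl.
    assert (e1 : Rabs (W (S (S N)) - W (S N)) <= 2 * d).
    { replace (W (S (S N)) - W (S N)) with ((W (S (S N)) - wstar) - (W (S N) - wstar)) by ring.
      pose proof (Rabs_triang (W (S (S N)) - wstar) (- (W (S N) - wstar))).
      rewrite Rabs_Ropp in H. unfold Rminus at 1. lra. }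
    assert (e2 : Rabs (W (S N) - W N) <= 2 * d).
    { replace (W (S N) - W N) with ((W (S N) - wstar) - (W N - wstar)) by ring.
      pose proof (Rabs_triang (W (S N) - wstar) (- (W N - wstar))).
      rewrite Rabs_Ropp in H. unfold Rminus at 1. lra. }
    assert (hl2 : Rabs (lam * W (S N)) <= 4 * C / (1 - b1) * d).
    { eapply Rle_trans; [exact hl|]. unfold Rdiv.
      apply Rle_trans with (C * (4 * d) * / (1 - b1)).
      - apply Rmult_le_compat_r; [left; apply Rinv_0_lt_compat; lra|].
        apply Rmult_le_compat_l; lra.
      - right; ring. }
    assert (hw : Rabs (lam * wstar - lam * W (S N)) <= lam * d).
    { replace (lam * wstar - lam * W (S N)) with (lam * - (W (S N) - wstar)) by ring.
      rewrite Rabs_mult, Rabs_Ropp, (Rabs_right lam) by lra. nra. }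
    pose proof (Rabs_triang (lam * wstar - lam * W (S N)) (lam * W (S N))).
    replace (lam * wstar - lam * W (S N) + lam * W (S N)) with (lam * wstar) in H by ring.
    unfold K. lra. }
  assert (Hz : Rabs (lam * wstar) = 0).
  { destruct (Rle_lt_dec (Rabs (lam * wstar)) 0) as [h|h].
    - pose proof (Rabs_pos (lam * wstar)). lra.
    - specialize (Hsmall (Rabs (lam * wstar) / (2 * K))).
      assert (0 < Rabs (lam * wstar) / (2 * K)).
      { unfold Rdiv. apply Rmult_lt_0_compat; [lra|]. apply Rinv_0_lt_compat; lra. }
      specialize (Hsmall H).
      replace (K * (Rabs (lam * wstar) / (2 * K))) with (Rabs (lam * wstar) / 2) in Hsmall
        by (field; lra).
      lra. }
  destruct (Req_dec (lam * wstar) 0) as [Hz0|Hz0]; [|apply Rabs_no_R0 in Hz0; contradiction]. clear Hz. rename Hz0 into Hz.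
  destruct (Rmult_integral _ _ Hz); lra.
Qed.
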